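(* Let $\mathcal{Y}$ be sampled from $\operatorname{TBM}(\rho,\mathcal{S},z_1,\dots,z_d)$, fix a mode $k$, let $Y=\mathrm{mat}_k\mathcal{Y}$ and $X=\mathbb{E}Y$. Then $$\min_{i,j\in[n_k]:\,z_k(i)\ne z_k(j)}\|(XX^\top)_{i:}-(XX^\top)_{j:}\|\ \ge\ \frac{\prod_{k'=1}^d\alpha_{k'}}{\sqrt{2\alpha_k}}\,\frac{\delta_k^2}{\sqrt{n_kr_k}}\,n_1\cdots n_d\,\rho^2,$$ where $\delta_k$ is the mode-$k$ cluster separation and $\alpha_{k'}$ the mode-$k'$ cluster balance coefficients.
   Context: Tensor block model: $\operatorname{TBM}(\rho,\mathcal{S},z_1,\dots,z_d)$ with dimensions $n_1,\dots,n_d$ and cluster counts $r_1,\dots,r_d$ is the law of a random tensor $\mathcal{Y}\in\mathbb{Z}^{n_1\times\cdots\times n_d}$ with independent entries and $\mathbb{E}\mathcal{Y}_{i_1\dots i_d}=\rho\,\mathcal{S}_{z_1(i_1)\dots z_d(i_d)}$, where $\rho\ge0$, $\mathcal{S}\in[-1,1]^{r_1\times\cdots\times r_d}$, $z_j\in[r_j]^{n_j}$. Matricization: $\mathrm{mat}_k(\mathcal{A})\in\mathbb{R}^{n_k\times(n_1\cdots n_d/n_k)}$ has rows indexed by $i_k$ and columns by the remaining indices in lexicographic order, with entries $\mathcal{A}_{i_1\dots i_d}$. Mode-$k$ cluster separation: $\delta_k=\min_{l\ne l'}\|(\mathrm{mat}_k\mathcal{S})_{l:}-(\mathrm{mat}_k\mathcal{S})_{l':}\|/\sqrt{r_1\cdots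 r_d/r_k}$. Mode-$j$ cluster balance coefficient: $\alpha_j=\min_{l\in[r_j]}|z_j^{-1}\{l\}|/(n_j/r_j)$. Norms are Euclidean. *)

(* Defs.v *)
From HB Require Import structures.
From mathcomp Require Import all_boot all_order all_algebra.
Set Implicit Arguments. Unset Strict Implicit. Unset Printing Implicit Defensive.
Import Order.TTheory GRing.Theory Num.Theory.
Local Open Scope ring_scope.

Definition mindex (d : nat) (n : 'I_d -> nat) := {dffun forall j : 'I_d, 'I_(n j)}.

(* Column indices of the mode-k matricization: multi-indices over the
   remaining modes j <> k. (The column order is irrelevant for the
   row-norm quantities used below.) *)
Definition cindex (d : nat) (n : 'I_d -> nat) (k : 'I_d) :=
  {dffun forall j : {j : 'I_d | j != k}, 'I_(n (val j))}.

Definition merge (d : nat) (n : 'I_d -> nat) (k : 'I_d) (i : 'I_(n k))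
    (c : cindex n k) : mindex n :=
  finfun (fun j : 'I_d =>
    match k =P j return 'I_(n j) with
    | ReflectT e => cast_ord (congr1 n e) i
    | ReflectF ne => c (exist _ j (introN eqP (fun e => ne (esym e))))
    end).

Definition matk (R : Type) (d : nat) (n : 'I_d -> nat) (A : mindex n -> R)
    (k : 'I_d) : 'I_(n k) -> cindex n k -> R :=
  fun i c => A (merge i c).

Arguments matk {R d n} A k _ _.

Definition zmap (d : nat) (n r : 'I_d -> nat)
    (z : forall j : 'I_d, 'I_(n j) -> 'I_(r j)) (m : mindex n) : mindex r :=
  finfun (fun j : 'I_d => z j (m j)).

(* Mean tensor of TBM(rho, S, z_1..z_d): E Y_{i_1..i_d} = rho S_{z_1(i_1)..z_d(i_d)}. *)
Definition tbm_mean (R : pzRingType) (d : nat) (n r : 'I_d -> nat) (rho : R)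
    (S : mindex r -> R) (z : forall j : 'I_d, 'I_(n j) -> 'I_(r j)) :
    mindex n -> R :=
  fun m => rho * S (zmap z m).

Definition gram (R : pzRingType) (I C : finType) (M : I -> C -> R) : I -> I -> R :=
  fun i j => \sum_(c : C) M i c * M j c.

Definition row_dist (R : rcfType) (I C : finType) (M : I -> C -> R) (i j : I) : R :=
  Num.sqrt (\sum_(c : C) (M i c - M j c) ^+ 2).

(* Minimum of f over {t | P t} (finite); equals 0 if that set is empty.
   The default of the min-fold is the max of f over the set, which is >= every
   value, so on a nonempty set this is exactly the minimum. *)
Definition fmin (R : realDomainType) (T : finType) (P : pred T) (f : T -> R) : R :=
  \big[Num.min/ \big[Num.max/0]_(t | P t) f t]_(t | P t) f t.

Definition sep (R : rcfType) (d : nat) (r : 'I_d -> nat) (S : mindex r -> R)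
    (k : 'I_d) : R :=
  fmin (fun p : 'I_(r k) * 'I_(r k) => p.1 != p.2)
    (fun p => row_dist (matk S k) p.1 p.2
              / Num.sqrt ((\prod_(j < d) r j)%:R / (r k)%:R)).

Definition balance (R : realFieldType) (d : nat) (n r : 'I_d -> nat)
    (z : forall j : 'I_d, 'I_(n j) -> 'I_(r j)) (j : 'I_d) : R :=
  fmin predT (fun l : 'I_(r j) =>
    #|[set i : 'I_(n j) | z j i == l]|%:R / ((n j)%:R / (r j)%:R)).
Arguments balance {R d n r} z j.

(* Main.v *)
Require Import Defs.
From HB Require Import structures.
From mathcomp Require Import all_boot all_order all_algebra.
From mathcomp Require Import ring lra.
Set Implicit Arguments. Unset Strict Implicit. Unset Printing Implicit Defensive.
Import Order.TTheory GRing.Theory Num.Theory.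
Local Open Scope ring_scope.

Lemma prod_sig (R : comPzSemiRingType) d (k : 'I_d) (F : 'I_d -> R) :
  \prod_(x : {j : 'I_d | j != k}) F (val x) = \prod_(j < d | j != k) F j.
Proof.
rewrite (reindex_omap (val : {j : 'I_d | j != k} -> 'I_d) insub); last first.
  by move=> i Pi; rewrite insubT.
apply: eq_bigl=> -[i iA]/=; rewrite insubT ?iA /=; apply/esym/eqP; congr Some; exact: val_inj.
Qed.

Lemma fmin_le (R : realDomainType) (T : finType) (P : pred T) (f : T -> R) t :
  P t -> fmin P f <= f t.
Proof.
move=> Pt; rewrite /fmin (bigD1 t) //=; by rewrite ge_min lexx.
Qed.

Lemma fmin_ge0 (R : realDomainType) (T : finType) (P : pred T) (f : T -> R) :
  (forall t, P t -> 0 <= f t) -> 0 <= fmin P f.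
Proof.
move=> H; rewrite /fmin; apply: (big_ind (fun x => 0 <= x)).
- apply: (big_ind (fun x => 0 <= x)) => //.
  by move=> x y hx hy; rewrite le_max hx.
- by move=> x y hx hy; rewrite le_min hx hy.
- exact: H.
Qed.

Definition zc d (n r : 'I_d -> nat) (z : forall j : 'I_d, 'I_(n j) -> 'I_(r j)) k
  (c : cindex n k) : cindex r k := finfun (fun j => z (val j) (c j)).

Lemma zmap_merge d (n r : 'I_d -> nat) (z : forall j : 'I_d, 'I_(n j) -> 'I_(r j)) k
  (i : 'I_(n k)) (c : cindex n k) : zmap z (Defs.merge i c) = Defs.merge (z k i) (zc z c).
Proof.
apply/ffunP => j; rewrite /zmap /Defs.merge !ffunE.
case: (k =P j) => [e|ne]; first by subst j; rewrite !cast_ord_id.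
by rewrite /zc ffunE.
Qed.

Lemma card_zc d (n r : 'I_d -> nat) (z : forall j : 'I_d, 'I_(n j) -> 'I_(r j)) k
  (c' : cindex r k) :
  #|[pred c : cindex n k | zc z c == c']| =
  (\prod_(j : {j : 'I_d | j != k}) #|[pred x | z (val j) x == c' j]|)%N.
Proof.
have -> : #|[pred c : cindex n k | zc z c == c']| =
          #|(family (fun j : {j : 'I_d | j != k} => [pred x | z (val j) x == c' j])
              : simpl_pred (cindex n k))|.
  apply: eq_card => c; rewrite !inE; apply/eqP/familyP => [<- j|H].
    by rewrite /zc ffunE inE.
  by apply/ffunP => j; rewrite /zc ffunE; apply/eqP; have := H j; rewrite inE.
rewrite card_family /image_mem foldrE big_map big_enum /=.
by apply: eq_bigl => x; rewrite inE.
Qed.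

Lemma sum_cnt (R : pzRingType) (T : finType) (P : pred T) (c : R) :
  \sum_(x | P x) c = c *+ #|[set x | P x]|.
Proof. by rewrite -sumr_const; apply: eq_bigl => x; rewrite inE. Qed.

Lemma sqr_le (R : realDomainType) (x y : R) : 0 <= x -> x <= y -> x ^+ 2 <= y ^+ 2.
Proof. by move=> hx hxy; rewrite !expr2 ler_pM. Qed.

Theorem lemma6p2 (R : rcfType) (d : nat) (n r : 'I_d -> nat) (rho : R)
    (S : mindex r -> R) (z : forall j : 'I_d, 'I_(n j) -> 'I_(r j)) (k : 'I_d) :
  0 <= rho ->
  (forall m : mindex r, -1 <= S m <= 1) ->
  let X := matk (tbm_mean rho S z) k in
  forall i j : 'I_(n k), z k i != z k j ->
    (\prod_(j' < d) balance z j') / Num.sqrt (2 * balance z k)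
      * (sep S k ^+ 2 / Num.sqrt ((n k * r k)%:R))
      * (\prod_(j' < d) (n j')%:R) * rho ^+ 2
    <= row_dist (gram X) i j.
Proof.
move=> rho0 _ X i j zij.
have al0 : forall j0 : 'I_d, (0:R) <= balance z j0.
  move=> j0; rewrite /balance; apply: fmin_ge0 => l _; apply: divr_ge0 => //.
  by apply: divr_ge0.
have dge0 : 0 <= sep S k.
  rewrite /sep; apply: fmin_ge0 => p _; apply: divr_ge0; exact: sqrtr_ge0.
have rd0 : 0 <= row_dist (gram X) i j by exact: sqrtr_ge0.
set pa := \prod_(j' < d) balance z j'.
set pn := \prod_(j' < d) (n j')%:R.
set LHS := _ * rho ^+ 2.
have [H0|Hpos] := boolP [exists j0, (n j0 == 0)%N || (balance z j0 == 0 :> R)].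
  have Z : pa * pn = 0.
    case/existsP: H0 => j0 /orP[/eqP e|/eqP e].
      by rewrite /pn (bigD1 j0) //= e mul0r mulr0.
    by rewrite /pa (bigD1 j0) //= e mul0r mul0r.
  have -> : LHS = (pa * pn) * ((Num.sqrt (2 * balance z k))^-1
      * (sep S k ^+ 2 / Num.sqrt ((n k * r k)%:R)) * rho ^+ 2) by rewrite /LHS; ring.
  by rewrite Z mul0r.
have npos : forall j0 : 'I_d, (0 < n j0)%N.
  move=> j0; move/existsPn: Hpos => /(_ j0); rewrite negb_or lt0n; by case/andP.
have apos : forall j0 : 'I_d, (0:R) < balance z j0.
  move=> j0; move/existsPn: Hpos => /(_ j0); rewrite negb_or; case/andP => _ h.
  by rewrite lt_def h al0.
have rpos : forall j0 : 'I_d, (0 < r j0)%N.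
  by move=> j0; exact: (leq_ltn_trans (leq0n _) (ltn_ord (z j0 (Ordinal (npos j0))))).
have cnt : forall (j0 : 'I_d) (l : 'I_(r j0)),
    (balance z j0 : R) * ((n j0)%:R / (r j0)%:R) <= #|[set x | z j0 x == l]|%:R.
  move=> j0 l; rewrite -ler_pdivlMr; last by rewrite divr_gt0 // ltr0n.
  rewrite /balance; exact: (fmin_le (P := predT)).
set Sk := matk S k.
have hX : forall x c, X x c = rho * Sk (z k x) (zc z c).
  by move=> x c; rewrite /X /matk /tbm_mean zmap_merge.
pose P l := \sum_(c : cindex n k) (Sk (z k i) (zc z c) - Sk (z k j) (zc z c)) * Sk l (zc z c).
have hG : forall x, gram X i x - gram X j x = rho ^+ 2 * P (z k x).
  move=> x; rewrite /gram -sumrB /P mulr_sumr; apply: eq_bigr => c _; rewrite !hX; ring.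
pose Na := (#|[set x | z k x == z k i]|%:R : R).
pose Nb := (#|[set x | z k x == z k j]|%:R : R).
pose T := \sum_x (gram X i x - gram X j x) ^+ 2.
have hT : rho ^+ 4 * (Na * P (z k i) ^+ 2 + Nb * P (z k j) ^+ 2) <= T.
  rewrite /T (eq_bigr _ (fun x _ => congr1 (fun t => t ^+ 2) (hG x))).
  rewrite (bigID (fun x => z k x == z k i)) /=.
  have s1 : \sum_(x | z k x == z k i) (rho ^+ 2 * P (z k x)) ^+ 2 = (rho ^+ 2 * P (z k i)) ^+ 2 * Na.
    rewrite (eq_bigr (fun=> (rho ^+ 2 * P (z k i)) ^+ 2)); last by move=> x /eqP ->.
    by rewrite sum_cnt mulr_natr.
  have s2 : \sum_(x | (z k x != z k i) && (z k x == z k j)) (rho ^+ 2 * P (z k x)) ^+ 2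
      = (rho ^+ 2 * P (z k j)) ^+ 2 * Nb.
    rewrite (eq_bigl (fun x => z k x == z k j)); last first.
      move=> x; case: (eqVneq (z k x) (z k j)) => [->|]; last by rewrite andbF.
      by rewrite andbT eq_sym.
    rewrite (eq_bigr (fun=> (rho ^+ 2 * P (z k j)) ^+ 2)); last by move=> x /eqP ->.
    by rewrite sum_cnt mulr_natr.
  rewrite s1 (bigID (fun x => z k x == z k j)) /= s2 addrA.
  have -> : rho ^+ 4 * (Na * P (z k i) ^+ 2 + Nb * P (z k j) ^+ 2) =
     (rho ^+ 2 * P (z k i)) ^+ 2 * Na + (rho ^+ 2 * P (z k j)) ^+ 2 * Nb by ring.
  rewrite lerDl; apply: sumr_ge0 => x _; exact: sqr_ge0.
pose g (c' : cindex r k) := (Sk (z k i) c' - Sk (z k j) c') ^+ 2.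
pose Q := \sum_(c : cindex n k) g (zc z c).
have hPQ : P (z k i) - P (z k j) = Q.
  by rewrite /P /Q -sumrB; apply: eq_bigr => c _; rewrite /g; ring.
pose Dm := \prod_(j0 < d | j0 != k) ((balance z j0 : R) * ((n j0)%:R / (r j0)%:R)).
pose E := \sum_(c' : cindex r k) g c'.
have Dm0 : 0 <= Dm.
  apply: prodr_ge0 => j0 _; apply: mulr_ge0 => //; exact: divr_ge0.
have hQ : Dm * E <= Q.
  rewrite /Q (partition_big (@zc _ _ _ z k) xpredT) //= /E mulr_sumr.
  apply: ler_sum => c' _.
  rewrite (eq_bigr (fun=> g c')); last by move=> c /eqP ->.
  rewrite sum_cnt -mulr_natr mulrC; apply: ler_wpM2l; first exact: sqr_ge0.
  have -> : #|[set x | zc z x == c']| = #|[pred c : cindex n k | zc z c == c']|.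
    by apply: eq_card => x; rewrite !inE.
  rewrite card_zc natr_prod /Dm -prod_sig; apply: ler_prod => j0 _.
  apply/andP; split; first by apply: mulr_ge0 => //; exact: divr_ge0.
  have := cnt (val j0) (c' j0).
  have -> : #|[set x | z (val j0) x == c' j0]| = #|[pred x | z (val j0) x == c' j0]|.
    by apply: eq_card => x; rewrite !inE.
  by [].
pose PR := ((\prod_(j0 < d) r j0)%:R : R).
pose rk := ((r k)%:R : R).
have rk0 : 0 < rk by rewrite ltr0n.
have PR0 : 0 < PR by rewrite /PR natr_prod; apply: prodr_gt0 => j0 _; rewrite ltr0n.
have E0 : 0 <= E by apply: sumr_ge0 => c' _; exact: sqr_ge0.
have hE : sep S k ^+ 2 * (PR / rk) <= E.
  have q0 : 0 < Num.sqrt (PR / rk) by rewrite sqrtr_gt0 divr_gt0.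
  have hd : sep S k <= row_dist Sk (z k i) (z k j) / Num.sqrt (PR / rk).
    rewrite /sep; exact: (@fmin_le _ _ (fun p : 'I_(r k) * 'I_(r k) => p.1 != p.2) _ (z k i, z k j) zij).
  rewrite ler_pdivlMr // in hd.
  have := sqr_le (mulr_ge0 dge0 (ltW q0)) hd.
  by rewrite /row_dist sqr_sqrtr // exprMn sqr_sqrtr // divr_ge0 // ltW.
pose m := (balance z k : R) * ((n k)%:R / rk).
have m0 : 0 <= m by apply: mulr_ge0 => //; apply: divr_ge0 => //; exact: ltW.
have hNa : m <= Na := cnt k (z k i).
have hNb : m <= Nb := cnt k (z k j).
pose K := Dm * (sep S k ^+ 2 * (PR / rk)).
have K0 : 0 <= K.
  apply: mulr_ge0 => //; apply: mulr_ge0; first exact: sqr_ge0.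
  by apply: divr_ge0; exact: ltW.
have hKQ : K <= Q := le_trans (ler_wpM2l Dm0 hE) hQ.
have hK2 : K ^+ 2 <= (P (z k i) - P (z k j)) ^+ 2 by rewrite hPQ; exact: sqr_le.
set Pa := P (z k i). set Pb := P (z k j).
have h1 : m * Pa ^+ 2 <= Na * Pa ^+ 2 := ler_wpM2r (sqr_ge0 _) hNa.
have h2 : m * Pb ^+ 2 <= Nb * Pb ^+ 2 := ler_wpM2r (sqr_ge0 _) hNb.
have h3 : m * K ^+ 2 / 2 <= m * (Pa ^+ 2 + Pb ^+ 2).
  have := sqr_ge0 (Pa + Pb) => h3.
  have h4 : K ^+ 2 / 2 <= Pa ^+ 2 + Pb ^+ 2.
    have -> : Pa ^+ 2 + Pb ^+ 2 = (Pa - Pb) ^+ 2 / 2 + (Pa + Pb) ^+ 2 / 2 by field.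
    apply: le_trans (_ : (Pa - Pb) ^+ 2 / 2 <= _).
      by rewrite ler_pM2r ?invr_gt0 ?ltr0n.
    by rewrite lerDl divr_ge0.
  by rewrite -mulrA; apply: ler_wpM2l.
have hfin : rho ^+ 4 * (m * K ^+ 2 / 2) <= T.
  apply: le_trans hT; apply: ler_wpM2l; first exact: exprn_ge0.
  apply: (le_trans h3); rewrite mulrDr; exact: lerD.
have LHS0 : 0 <= LHS.
  rewrite /LHS; apply: mulr_ge0; last exact: exprn_ge0.
  apply: mulr_ge0; last by apply: prodr_ge0 => j0 _; exact: ler0n.
  apply: mulr_ge0; apply: divr_ge0; rewrite ?sqrtr_ge0 //; last exact: sqr_ge0.
  exact: prodr_ge0.
have T0 : 0 <= T by apply: sumr_ge0 => x _; exact: sqr_ge0.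
suff eL : LHS ^+ 2 = rho ^+ 4 * (m * K ^+ 2 / 2).
  rewrite /row_dist -/T -(ger0_norm LHS0) -sqrtr_sqr ler_sqrt //; by rewrite eL.
have e_pa : pa = balance z k * \prod_(j0 < d | j0 != k) balance z j0 by rewrite /pa (bigD1 k).
have e_pn : pn = (n k)%:R * \prod_(j0 < d | j0 != k) ((n j0)%:R : R) by rewrite /pn (bigD1 k).
have e_PR : PR = rk * \prod_(j0 < d | j0 != k) ((r j0)%:R : R) by rewrite /PR natr_prod (bigD1 k).
have e_Dm : Dm = (\prod_(j0 < d | j0 != k) (balance z j0 : R)) *
     ((\prod_(j0 < d | j0 != k) ((n j0)%:R : R)) / \prod_(j0 < d | j0 != k) ((r j0)%:R : R)).
  by rewrite /Dm big_split /= prodf_div.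
have pr0 : 0 < \prod_(j0 < d | j0 != k) ((r j0)%:R : R) by apply: prodr_gt0 => j0 _; rewrite ltr0n.
have s1 : Num.sqrt (2 * balance z k) ^+ 2 = 2 * (balance z k : R) by rewrite sqr_sqrtr // mulr_ge0.
have s2 : Num.sqrt ((n k * r k)%:R) ^+ 2 = (n k)%:R * rk :> R by rewrite sqr_sqrtr // natrM.
have sn1 : Num.sqrt (2 * balance z k) != 0 :> R by rewrite sqrtr_eq0 -ltNge mulr_gt0.
have sn2 : Num.sqrt ((n k * r k)%:R) != 0 :> R by rewrite sqrtr_eq0 -ltNge ltr0n muln_gt0 npos rpos.
rewrite /LHS /K /m.
have -> : (pa / Num.sqrt (2 * balance z k) * (sep S k ^+ 2 / Num.sqrt (n k * r k)%:R) * pn * rho ^+ 2) ^+ 2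
   = pa ^+ 2 / Num.sqrt (2 * balance z k) ^+ 2 * (sep S k ^+ 4 / Num.sqrt (n k * r k)%:R ^+ 2) * pn ^+ 2 * rho ^+ 4.
  by field; rewrite sn1 sn2.
rewrite s1 s2 e_pa e_pn e_Dm e_PR.
have ak0 : (balance z k : R) != 0 by rewrite lt0r_neq0.
have nk0 : ((n k)%:R : R) != 0 by rewrite pnatr_eq0 -lt0n npos.
have rk0' : rk != 0 by rewrite lt0r_neq0.
have pr0' := lt0r_neq0 pr0.
by field; apply/and4P; split.
Qed.
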